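(* Let $\mathcal S$ be a $\Rsh$-closed $\diamond\cap$-closed subset of a finite multi-algebra $\mathcal A=\mathcal A_1\times\cdots\times\mathcal A_m$. If for all distinct $i,j\in\{1,\dots,m\}$ every network with only three variables over the bi-slice $\mathcal S_{i,j}$ is dissociable, then $\mathcal S$ is dissociable.
   Context: A finite non-associative algebra is a tuple $(\mathcal A,\cup,\neg,\emptyset,\mathcal B,\diamond,\overline{\cdot},e)$ where $(\mathcal A,\cup,\neg,\emptyset,\mathcal B)$ is a finite Boolean algebra (with $x\cap y=\neg(\neg x\cup\neg y)$) and for all $x,y,z$: $\overline{\overline x}=x$, $\overline{x\cup y}=\overline x\cup\overline y$, $\overline{x\diamond y}=\overline y\diamond\overline x$, $e\diamond x=x\diamond e=x$, $x\diamond(y\cup z)=(x\diamond y)\cup(x\diamond z)$, $(x\diamond y)\cap\overline z=\emptyset\iff(y\diamond z)\cap\overline x=\emptyset$. $r\subseteq r'$ means $r\cup r'=r'$. A projection operator from $\mathcal A$ to $\mathcal A'$ is a map $\Rsh$ with $\Rsh(r\cup r')=\Rsh r\cup\Rsh r'$ and $\Rsh\overline r=\overline{\Rsh r}$. A finite multi-algebra is a product $\mathcal A_1\times\cdots\times\mathcal A_m$ of finite non-associative algebras with projection operators $\Rsh_i^j:\mathcal A_i\to\mathcal A_j$ for all distinct $i,j$; $\subseteq,\diamond,\cap,\overline{\cdot}$ on relations $R=(R_1,\dots,R_m)$ componentwise. $R$ is closed under projection if $R_j\subseteq\Rsh_i^jR_i$ for all distinct $i,j$; the projection closure $\Rsh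 R$ is obtained by repeatedly replacing $R_j$ by $R_j\cap\Rsh_i^jR_i$ until a fixed point. A network over $\mathcal S\subseteq\mathcal A$ is a finite set $E$ of variables with $N^{xy}\in\mathcal S$ for all distinct $x,y\in E$, $N^{yx}=\overline{N^{xy}}$; $N_i^{xy}=(N^{xy})_i$. $N$ is trivially inconsistent if some $N_i^{xy}=\emptyset$; closed under composition if $N^{xz}\subseteq N^{xy}\diamond N^{yz}$ for all distinct $x,y,z$; closed under projection if all $N^{xy}$ are; algebraically consistent if closed under both and not trivially inconsistent. $N$ is dissociable if replacing each $N^{xy}$ by $\Rsh N^{xy}$ and then closing under composition (repeating $N^{xz}\leftarrow N^{xz}\cap(N^{xy}\diamond N^{yz})$ to a fixed point) yields a network that is algebraically consistent or trivially inconsistent; a subset is dissociable if every network over it is. $\mathcal S$ is $\diamond\cap$-closed if $(R\diamond R')\cap R''\in\mathcal S$ for all $R,R',R''\in\mathcal S$, and $\Rsh$-closed if $\Rsh R\in\mathcal S$ for all $R\in\mathcal S$. The bi-slice $\mathcal A_{i,j}$ is the multi-algebra $\mathcal A_i\times\mathcal A_j$ with projections $\Rsh_i^j,\Rsh_j^i$; the bi-slice of $\mathcal S$ is $\mathcal S_{i,j}=\{(R_i,R_j):R\in\mathcal S\}\subseteq\mathcal A_{i,j}$. *)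

(* Defs.v *)
From HB Require Import structures.
From mathcomp Require Import all_boot all_order.

Set Implicit Arguments.
Unset Strict Implicit.
Unset Printing Implicit Defensive.

Import Order.Theory.
Local Open Scope order_scope.

(* The underlying finite Boolean algebra
   (A, ∪, ¬, ∅, B) is a finite complemented distributive lattice with top and
   bottom: ∪ = join `|`, ¬ = compl ~`, ∅ = \bot, B = \top, and
   x ∩ y = ¬(¬x ∪ ¬y) is the lattice meet `&`. *)
Record nalg := NAlg {
  ndisp : Order.disp_t;
  ncar : finCTBDistrLatticeType ndisp;
  ncomp : ncar -> ncar -> ncar;
  nconv : ncar -> ncar;
  nid : ncar;
  nconvK : forall x, nconv (nconv x) = x;
  nconvU : forall x y, nconv (x `|` y) = nconv x `|` nconv y;
  nconvC : forall x y, nconv (ncomp x y) = ncomp (nconv y) (nconv x);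
  nid_l : forall x, ncomp nid x = x;
  nid_r : forall x, ncomp x nid = x;
  ncompU : forall x y z, ncomp x (y `|` z) = ncomp x y `|` ncomp x z;
  ncycle : forall x y z,
    (ncomp x y `&` nconv z == \bot) = (ncomp y z `&` nconv x == \bot)
}.

(* A finite multi-algebra indexed by a finite type I (I = 'I_m for
   A_1 × ... × A_m), with projection operators for all distinct i, j. *)
Unset Implicit Arguments.
Record malg (I : finType) := MAlg {
  alg : I -> nalg;
  proj : forall i j : I, ncar (alg i) -> ncar (alg j);
  projU : forall (i j : I) (r r' : ncar (alg i)), i != j ->
    proj i j (r `|` r') = proj i j r `|` proj i j r';
  projV : forall (i j : I) (r : ncar (alg i)), i != j ->
    proj i j (nconv r) = nconv (proj i j r)
}.

Arguments proj {I} m i j.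
Arguments projU {I} m i j r r'.
Arguments projV {I} m i j r.
Arguments alg {I} m i.
Set Implicit Arguments.

Section MultiAlgebra.
Variables (I : finType) (M : malg I).

Definition Rel := forall i : I, ncar (alg M i).

Definition relle (R R' : Rel) : Prop := forall i, R i <= R' i.
Definition relcomp (R R' : Rel) : Rel := fun i => ncomp (R i) (R' i).
Definition relmeet (R R' : Rel) : Rel := fun i => R i `&` R' i.
Definition relconv (R : Rel) : Rel := fun i => nconv (R i).

Definition proj_closed (R : Rel) : Prop :=
  forall i j, i != j -> R j <= proj M i j (R i).

Definition pstep (R : Rel) : Rel :=
  fun j => R j `&` \meet_(i | i != j) proj M i j (R i).

Definition alg_size : nat := (\sum_(i : I) #|ncar (alg M i)|)%N.

(* projection closure: iterate until the fixed point (reached after at most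
   alg_size rounds, since every non-trivial round strictly decreases some
   component). *)
Definition pclos (R : Rel) : Rel := iter alg_size pstep R.

Definition Network (E : finType) := E -> E -> Rel.

Definition is_network (S : Rel -> Prop) (E : finType) (N : Network E) : Prop :=
  forall x y, x != y -> S (N x y) /\ N y x = relconv (N x y).

Definition triv_incons (E : finType) (N : Network E) : Prop :=
  exists x y, x != y /\ exists i, N x y i = \bot.

Definition comp_closed (E : finType) (N : Network E) : Prop :=
  forall x y z, x != y -> y != z -> x != z ->
    relle (N x z) (relcomp (N x y) (N y z)).

Definition net_proj_closed (E : finType) (N : Network E) : Prop :=
  forall x y, x != y -> proj_closed (N x y).

Definition alg_consistent (E : finType) (N : Network E) : Prop :=
  [/\ comp_closed N, net_proj_closed N & ~ triv_incons N].

Definition cstep (E : finType) (N : Network E) : Network E :=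
  fun x z i => N x z i `&` \meet_(y | (y != x) && (y != z)) ncomp (N x y i) (N y z i).

Definition cclos (E : finType) (N : Network E) : Network E :=
  iter (#|E| * #|E| * alg_size)%N (@cstep E) N.

Definition dissociable (E : finType) (N : Network E) : Prop :=
  let N' := cclos (fun x y => pclos (N x y)) in
  alg_consistent N' \/ triv_incons N'.

Definition dissociable_set (S : Rel -> Prop) : Prop :=
  forall (E : finType) (N : Network E), is_network S N -> dissociable N.

Definition proj_closed_set (S : Rel -> Prop) : Prop :=
  forall R, S R -> S (pclos R).

Definition compmeet_closed_set (S : Rel -> Prop) : Prop :=
  forall R R' R'', S R -> S R' -> S R'' -> S (relmeet (relcomp R R') R'').

End MultiAlgebra.

(* Bi-slice A_{i,j}: the multi-algebra indexed by the two-element index set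
   {i, j}, with projections ⇂_i^j and ⇂_j^i. *)
Definition sub2 (I : finType) (i j : I) := {k : I | (k == i) || (k == j)}.

Lemma val_neq (I : finType) (i j : I) (k l : sub2 i j) :
  k != l -> val k != val l.
Proof. by apply: contra => /eqP /val_inj ->. Qed.

Definition bislice (I : finType) (M : malg I) (i j : I) : malg (sub2 i j) :=
  @MAlg (sub2 i j) (fun k => alg M (val k)) (fun k l => proj M (val k) (val l))
    (fun k l r r' h => projU M (val k) (val l) r r' (val_neq h))
    (fun k l r h => projV M (val k) (val l) r (val_neq h)).

Definition bislice_set (I : finType) (M : malg I) (S : Rel M -> Prop) (i j : I)
  : Rel (bislice M i j) -> Prop :=
  fun R' => exists R : Rel M, S R /\ forall k : sub2 i j, R' k = R (val k).

(* Main.v *)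
Require Import Defs.
From HB Require Import structures.
From mathcomp Require Import all_boot all_order.
From Stdlib Require Import Classical FunctionalExtensionality.
Set Implicit Arguments.
Unset Strict Implicit.
Unset Printing Implicit Defensive.
Import Order.Theory.
Local Open Scope order_scope.

Section NAlgLemmas.
Variable A : nalg.
Implicit Types a b c : ncar A.

Lemma conv_mono a b : a <= b -> nconv a <= nconv b.
Proof. by move=> /join_idPr H; apply/join_idPr; rewrite -nconvU H. Qed.

Lemma comp_monor a b b' : b <= b' -> ncomp a b <= ncomp a b'.
Proof. by move=> /join_idPr H; apply/join_idPr; rewrite -ncompU H. Qed.

Lemma comp_monol a a' b : a <= a' -> ncomp a b <= ncomp a' b.
Proof.
move=> H.
have E (x y : ncar A) : ncomp x y = nconv (ncomp (nconv y) (nconv x)) by rewrite nconvC !nconvK.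
by rewrite (E a b) (E a' b); apply: conv_mono; apply: comp_monor; apply: conv_mono.
Qed.

Lemma comp_mono a a' b b' : a <= a' -> b <= b' -> ncomp a b <= ncomp a' b'.
Proof. by move=> H1 H2; apply: le_trans (comp_monol _ H1) (comp_monor _ H2). Qed.

Lemma conv_le a b : (nconv a <= nconv b) = (a <= b).
Proof.
apply/idP/idP; last exact: conv_mono.
by move=> /conv_mono; rewrite !nconvK.
Qed.

Lemma conv_meet a b : nconv (a `&` b) = nconv a `&` nconv b.
Proof.
apply: le_anti; rewrite lexI !conv_mono ?leIl ?leIr //=.
by rewrite -conv_le nconvK lexI -{2}(nconvK a) -{3}(nconvK b) !conv_mono ?leIl ?leIr.
Qed.

Lemma conv_top : nconv (\top : ncar A) = \top.
Proof. by apply: le_anti; rewrite lex1 /= -{1}(nconvK \top) conv_mono ?lex1. Qed.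

Lemma conv_bigmeet (J : Type) (r : seq J) (P : pred J) (F : J -> ncar A) :
  nconv (\meet_(y <- r | P y) F y) = \meet_(y <- r | P y) nconv (F y).
Proof.
elim/big_rec2: _ => [|y u v Py <-]; first exact: conv_top.
exact: conv_meet.
Qed.

Lemma conv_comp a b : ncomp (nconv a) (nconv b) = nconv (ncomp b a).
Proof. by rewrite nconvC. Qed.
End NAlgLemmas.

Lemma iter_fixpoint (X : Type) (f : X -> X) (phi : X -> nat) :
  (forall x, f x <> x -> (phi (f x) < phi x)%N) ->
  forall n x, (phi x <= n)%N -> f (iter n f x) = iter n f x.
Proof.
move=> Hd; elim=> [|n IH] x hx.
  case: (classic (f x = x)) => // /Hd lt.
  by move: (leq_trans lt hx); rewrite ltn0.
case: (classic (f x = x)) => [fx|/Hd lt]; first by rewrite iter_fix.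
by rewrite iterSr; apply: IH; rewrite -ltnS (leq_trans lt hx).
Qed.

Lemma iter_stable (X : Type) (f : X -> X) (phi : X -> nat) :
  (forall x, f x <> x -> (phi (f x) < phi x)%N) ->
  forall n n' x, (phi x <= n)%N -> (phi x <= n')%N -> iter n f x = iter n' f x.
Proof.
move=> Hd.
suff H n n' x : (n <= n')%N -> (phi x <= n)%N -> iter n f x = iter n' f x.
  move=> n n' x h1 h2; case: (leqP n n') => h; first exact: H.
  by symmetry; apply: H => //; apply: ltnW.
move=> le hx; have -> : n' = ((n' - n) + n)%N by rewrite subnK.
by rewrite iterD [RHS]iter_fix // (iter_fixpoint Hd hx).
Qed.

Section Pot.
Variables (I : finType) (M : malg I).

Definition dsz (i : I) (r : ncar (alg M i)) : nat := #|[pred s | s <= r]|.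

Lemma dsz_le i (r r' : ncar (alg M i)) : r <= r' -> (dsz r <= dsz r')%N.
Proof. by move=> le; apply: subset_leq_card; apply/subsetP => s; rewrite !inE => /le_trans; apply. Qed.

Lemma dsz_lt i (r r' : ncar (alg M i)) : r <= r' -> r <> r' -> (dsz r < dsz r')%N.
Proof.
move=> le ne; apply: proper_card; apply/properP; split.
  by apply/subsetP => s; rewrite !inE => /le_trans; apply.
exists r'; rewrite !inE ?lexx //.
by apply/negP => h; apply: ne; apply: le_anti; rewrite le h.
Qed.

Lemma dsz_max i (r : ncar (alg M i)) : (dsz r <= #|ncar (alg M i)|)%N.
Proof. exact: max_card. Qed.

Definition phiR (R : Rel M) : nat := (\sum_i dsz (R i))%N.

Lemma phiR_le R R' : relle R R' -> (phiR R <= phiR R')%N.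
Proof. by move=> le; apply: leq_sum => i _; apply: dsz_le. Qed.

Lemma phiR_lt R R' : relle R R' -> R <> R' -> (phiR R < phiR R')%N.
Proof.
move=> le ne.
have [i ni] : exists i, R i <> R' i.
  apply: not_all_ex_not => h; apply: ne; exact: functional_extensionality_dep.
rewrite /phiR (bigD1 i) //= [X in (_ < X)%N](bigD1 i) //=.
rewrite -addSn leq_add //; first exact: dsz_lt.
by apply: leq_sum => j _; apply: dsz_le.
Qed.

Lemma phiR_max R : (phiR R <= alg_size M)%N.
Proof. by apply: leq_sum => i _; apply: dsz_max. Qed.

Variable E : finType.
Definition phiN (N : Network M E) : nat := (\sum_x \sum_z phiR (N x z))%N.

Lemma phiN_lt (N N' : Network M E) :
  (forall x z, relle (N x z) (N' x z)) -> N <> N' -> (phiN N < phiN N')%N.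
Proof.
move=> le ne.
have [x nx] : exists x, N x <> N' x.
  apply: not_all_ex_not => h; apply: ne; exact: functional_extensionality.
have [z nz] : exists z, N x z <> N' x z.
  apply: not_all_ex_not => h; apply: nx; exact: functional_extensionality.
rewrite /phiN (bigD1 x) //= [X in (_ < X)%N](bigD1 x) //=.
rewrite -addSn leq_add //.
  rewrite (bigD1 z) //= [X in (_ < X)%N](bigD1 z) //=.
  rewrite -addSn leq_add //; first exact: phiR_lt.
  by apply: leq_sum => j _; apply: phiR_le.
by apply: leq_sum => j _; apply: leq_sum => k _; apply: phiR_le.
Qed.

Lemma phiN_max N : (phiN N <= #|E| * #|E| * alg_size M)%N.
Proof.
rewrite /phiN -mulnA -sum_nat_const; apply: leq_sum => x _.
rewrite -sum_nat_const; apply: leq_sum => z _; exact: phiR_max.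
Qed.
End Pot.

Section PC.
Variables (I : finType) (M : malg I).

Lemma relle_trans (R1 R2 R3 : Rel M) : relle R1 R2 -> relle R2 R3 -> relle R1 R3.
Proof. by move=> h1 h2 i; apply: le_trans (h1 i) (h2 i). Qed.

Lemma relle_refl (R : Rel M) : relle R R.
Proof. by move=> i. Qed.

Lemma pstep_le (R : Rel M) : relle (pstep R) R.
Proof. by move=> i; rewrite /pstep leIl. Qed.

Lemma pstep_dec (R : Rel M) : pstep R <> R -> (phiR (pstep R) < phiR R)%N.
Proof. by move=> ne; apply: phiR_lt => //; apply: pstep_le. Qed.

Lemma pclos_le (R : Rel M) : relle (pclos R) R.
Proof.
rewrite /pclos; elim: (alg_size M) => [|n IH] /=; first exact: relle_refl.
exact: relle_trans (pstep_le _) IH.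
Qed.

Lemma pclos_fix (R : Rel M) : pstep (pclos R) = pclos R.
Proof. exact: (iter_fixpoint (@pstep_dec) (phiR_max R)). Qed.

Lemma pfix_closed (R : Rel M) : pstep R = R -> proj_closed R.
Proof.
move=> fx i j nij; have -> : R j = pstep R j by rewrite fx.
rewrite /pstep.
apply: le_trans (leIr _ _) _.
exact: meets_inf.
Qed.

Lemma pclos_closed (R : Rel M) : proj_closed (pclos R).
Proof. apply: pfix_closed; exact: pclos_fix. Qed.

Lemma closed_pfix (R : Rel M) : proj_closed R -> pstep R = R.
Proof.
move=> pc; apply: functional_extensionality_dep => j; rewrite /pstep.
apply/meet_idPl; apply: meets_ge => i nij; exact: pc.
Qed.

Lemma closed_pclos (R : Rel M) : proj_closed R -> pclos R = R.
Proof. by move=> pc; rewrite /pclos iter_fix // closed_pfix. Qed.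

Lemma pstep_conv (R : Rel M) : pstep (relconv R) = relconv (pstep R).
Proof.
apply: functional_extensionality_dep => j; rewrite /pstep /relconv.
rewrite conv_meet conv_bigmeet; congr (_ `&` _).
by apply: eq_bigr => i nij; rewrite projV // eq_sym.
Qed.

Lemma pclos_conv (R : Rel M) : pclos (relconv R) = relconv (pclos R).
Proof.
rewrite /pclos; elim: (alg_size M) => [|n IH] //=.
by rewrite IH pstep_conv.
Qed.
End PC.

Section CC.
Variables (I : finType) (M : malg I) (E : finType).
Implicit Types N L : Network M E.

Lemma cstep_le N x z : relle (cstep N x z) (N x z).
Proof. by move=> i; rewrite /cstep leIl. Qed.

Lemma cclos_le N x z : relle (cclos N x z) (N x z).
Proof.
rewrite /cclos; elim: (_ * _)%N => [|n IH] /=; first exact: relle_refl.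
exact: relle_trans (cstep_le _ _ _) IH.
Qed.

Lemma cstep_dec N : cstep N <> N -> (phiN (cstep N) < phiN N)%N.
Proof. by move=> ne; apply: phiN_lt => // x z; apply: cstep_le. Qed.

Lemma cclos_fix N : cstep (cclos N) = cclos N.
Proof. exact: (iter_fixpoint (@cstep_dec) (phiN_max N)). Qed.

Lemma cfix_closed N : cstep N = N -> comp_closed N.
Proof.
move=> fx x y z nxy nyz nxz i.
have -> : N x z i = cstep N x z i by rewrite fx.
rewrite /cstep /relcomp; apply: le_trans (leIr _ _) _.
by apply: meets_inf; rewrite eq_sym nxy nyz.
Qed.

Lemma cclos_closed N : comp_closed (cclos N).
Proof. apply: cfix_closed; exact: cclos_fix. Qed.

Lemma cstep_greatest N L : comp_closed L ->
  (forall x z, x != z -> relle (L x z) (N x z)) ->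
  forall x z, x != z -> relle (L x z) (cstep N x z).
Proof.
move=> cL le x z nxz i; rewrite /cstep lexI le //=.
apply: meets_ge => y /andP [nyx nyz].
apply: le_trans (cL x y z _ nyz nxz i) _; first by rewrite eq_sym.
by apply: comp_mono; apply: le => //; rewrite eq_sym.
Qed.

Lemma cclos_greatest N L : comp_closed L ->
  (forall x z, x != z -> relle (L x z) (N x z)) ->
  forall x z, x != z -> relle (L x z) (cclos N x z).
Proof.
move=> cL; rewrite /cclos; elim: (_ * _)%N N => [|n IH] N le //=.
by apply: cstep_greatest => //; apply: IH.
Qed.

Definition symN N := forall x y, x != y -> N y x = relconv (N x y).

Lemma cstep_sym N : symN N -> symN (cstep N).
Proof.
move=> sN x z nxz; apply: functional_extensionality_dep => i.
rewrite /cstep /relconv conv_meet conv_bigmeet.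
rewrite (sN x z nxz); congr (_ `&` _).
rewrite [in RHS](eq_bigl (fun y => (y != z) && (y != x))); last by move=> y; rewrite andbC.
apply: eq_bigr => y /andP [nyz nyx].
rewrite (sN y z nyz) (sN x y); last by rewrite eq_sym.
by rewrite /relconv nconvC.
Qed.

Lemma cclos_sym N : symN N -> symN (cclos N).
Proof.
rewrite /cclos; elim: (_ * _)%N => [|n IH] //= sN.
by apply: cstep_sym; apply: IH.
Qed.

Lemma inS_meet (S : Rel M -> Prop) : compmeet_closed_set S ->
  forall (P : pred E) (F G : E -> Rel M) (s : seq E) (A : Rel M),
  S A -> (forall y, P y -> S (F y) /\ S (G y)) ->
  S (fun i => A i `&` \meet_(y <- s | P y) ncomp (F y i) (G y i)).
Proof.
move=> Hc P F G; elim=> [|y s IH] A SA HFG.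
  have -> : (fun i => A i `&` \meet_(y <- [::] | P y) ncomp (F y i) (G y i)) = A.
    by apply: functional_extensionality_dep => i; rewrite big_nil meetx1.
  exact: SA.
case Py: (P y).
  have -> : (fun i => A i `&` \meet_(y0 <- y :: s | P y0) ncomp (F y0 i) (G y0 i)) =
    (fun i => relmeet (relcomp (F y) (G y)) A i `&`
              \meet_(y0 <- s | P y0) ncomp (F y0 i) (G y0 i)).
    apply: functional_extensionality_dep => i.
    by rewrite big_cons Py /relmeet /relcomp meetA [ncomp _ _ `&` A i]meetC.
  apply: IH => //; have [h1 h2] := HFG y Py; exact: Hc.
have -> : (fun i => A i `&` \meet_(y0 <- y :: s | P y0) ncomp (F y0 i) (G y0 i)) =
  (fun i => A i `&` \meet_(y0 <- s | P y0) ncomp (F y0 i) (G y0 i)).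
  by apply: functional_extensionality_dep => i; rewrite big_cons Py.
exact: IH.
Qed.

Definition inSN (S : Rel M -> Prop) N := forall x y, x != y -> S (N x y).

Lemma cstep_inS S N : compmeet_closed_set S -> inSN S N -> inSN S (cstep N).
Proof.
move=> Hc SN x z nxz; rewrite /cstep.
apply: (inS_meet Hc (F := N x) (G := fun y => N y z)); first exact: SN.
move=> y /andP [nyx nyz]; split; apply: SN => //; by rewrite eq_sym.
Qed.

Lemma cclos_inS S N : compmeet_closed_set S -> inSN S N -> inSN S (cclos N).
Proof.
move=> Hc; rewrite /cclos; elim: (_ * _)%N => [|n IH] //= sN.
by apply: cstep_inS => //; apply: IH.
Qed.
End CC.

Section Bis.
Variables (I : finType) (M : malg I) (i j : I) (E : finType).

Definition res (R : Rel M) : Rel (bislice M i j) := fun k => R (val k).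
Definition resN (T : Network M E) : Network (bislice M i j) E :=
  fun a b => res (T a b).

Lemma cstep_res T : cstep (resN T) = resN (cstep T).
Proof. reflexivity. Qed.

Lemma iter_res n T : iter n (@cstep _ _ E) (resN T) = resN (iter n (@cstep _ _ E) T).
Proof. by elim: n => //= n ->. Qed.

Lemma res_closed R : proj_closed R -> proj_closed (res R).
Proof. move=> pc k l nkl; exact: pc (val_neq nkl). Qed.

Lemma cclos_res T : cclos (resN T) = resN (cclos T).
Proof.
rewrite /cclos.
set nb := (#|E| * #|E| * alg_size (bislice M i j))%N.
set nM := (#|E| * #|E| * alg_size M)%N.
rewrite (@iter_stable _ _ _ (@cstep_dec _ _ E) nb (nb + nM)) ?phiN_max //; last first.
  exact: leq_trans (phiN_max _) (leq_addr _ _).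
rewrite iter_res; congr resN.
apply: (iter_stable (@cstep_dec _ _ E)); last exact: phiN_max.
exact: leq_trans (phiN_max _) (leq_addl _ _).
Qed.

Lemma res_closed_back R : proj_closed (res R) -> i != j -> R j <= proj M i j (R i).
Proof.
move=> pc nij.
have ki : (i == i) || (i == j) by rewrite eqxx.
have kj : (j == i) || (j == j) by rewrite eqxx orbT.
have := pc (exist _ i ki) (exist _ j kj); apply.
by apply/negP => /eqP [] /eqP; apply/negP.
Qed.
End Bis.

Section Tri.
Variables (E : finType) (x y z : E).
Hypotheses (nxy : x != y) (nyz : y != z) (nxz : x != z).

Definition tf (a : 'I_3) : E :=
  if val a == 0%N then x else if val a == 1%N then y else z.

Lemma tf_inj a b : a != b -> tf a != tf b.
Proof.
move: a b => [[|[|[|a]]] Ha] [[|[|[|b]]] Hb] //= nab; rewrite /tf /=;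
  rewrite -?val_eqE //= in nab *; by rewrite // eq_sym.
Qed.

Definition inT (u : E) := [|| u == x, u == y | u == z].
Definition tg (u : E) : 'I_3 :=
  if u == x then @Ordinal 3 0 isT else if u == y then @Ordinal 3 1 isT
  else @Ordinal 3 2 isT.

Lemma tfg u : inT u -> tf (tg u) = u.
Proof.
rewrite /inT /tg /tf; case: (eqVneq u x) => [->|_] //=.
case: (eqVneq u y) => [->|_] //= /eqP -> //.
Qed.

Lemma tg_neq u v : inT u -> inT v -> u != v -> tg u != tg v.
Proof. move=> iu iv; apply: contraNN => /eqP h; by rewrite -(tfg iu) -(tfg iv) h. Qed.

Lemma tgx : tg x = @Ordinal 3 0 isT.
Proof. by rewrite /tg eqxx. Qed.
Lemma tgy : tg y = @Ordinal 3 1 isT.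
Proof. by rewrite /tg eq_sym (negbTE nxy) eqxx. Qed.
Lemma tgz : tg z = @Ordinal 3 2 isT.
Proof. by rewrite /tg eq_sym (negbTE nxz) eq_sym (negbTE nyz). Qed.
End Tri.

Section Main.
Variables (I : finType) (M : malg I) (S : Rel M -> Prop).
Hypothesis HcS : compmeet_closed_set S.
Hypothesis Hyp : forall i j : I, i != j ->
     forall (E : finType), #|E| = 3 ->
     forall N : Network (bislice M i j) E,
       is_network (@bislice_set _ M S i j) N -> dissociable N.
Variables (E : finType) (N1 : Network M E).
Let N' := cclos N1.
Hypothesis nt : ~ triv_incons N'.

Definition Inv (K : Network M E) :=
  [/\ inSN S K, symN K, net_proj_closed K,
      (forall x y, x != y -> relle (N' x y) (K x y)) &
      (forall x y, relle (K x y) (N1 x y))].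

Lemma final K : Inv K -> comp_closed K -> net_proj_closed N'.
Proof.
case=> _ _ pK lo hi cK x y nxy.
have -> : N' x y = K x y.
  apply: functional_extensionality_dep => i; apply: le_anti.
  rewrite lo //=; apply: (cclos_greatest cK) => //.
exact: pK.
Qed.

Lemma step K : Inv K -> ~ comp_closed K ->
  exists K', Inv K' /\ (phiN K' < phiN K)%N.
Proof.
case=> SK sK pK lo hi ncc.
have [x [y [z [nxy [nyz [nxz nle]]]]]] : exists x y z, [/\ x != y, y != z, x != z &
    ~ relle (K x z) (relcomp (K x y) (K y z))].
  apply: NNPP => h; apply: ncc => x y z nxy nyz nxz; apply: NNPP => hn.
  by apply: h; exists x, y, z.
pose f := tf x y z.
have finj a b : a != b -> f a != f b by exact: tf_inj.
pose Tn : Network M 'I_3 := fun a b => pclos (K (f a) (f b)).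
have TnE a b : a != b -> Tn a b = K (f a) (f b).
  by move=> nab; rewrite /Tn closed_pclos //; apply: pK; apply: finj.
pose C := cclos Tn.
have STn : inSN S Tn by move=> a b nab; rewrite TnE //; apply: SK; apply: finj.
have sTn : symN Tn.
  move=> a b nab; rewrite (TnE b a) 1?eq_sym // TnE //; exact: (sK (f a) (f b) (finj _ _ nab)).
have SC : inSN S C by apply: cclos_inS.
have sC : symN C by apply: cclos_sym.
have cC : comp_closed C by apply: cclos_closed.
have CT a b : relle (C a b) (K (f a) (f b)).
  by apply: relle_trans (cclos_le _ _ _) _; apply: pclos_le.
have LC a b : a != b -> relle (N' (f a) (f b)) (C a b).
  apply: (cclos_greatest (L := fun a b => N' (f a) (f b))).
    move=> a' b' c' h1 h2 h3; apply: cclos_closed; by apply: finj.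
  by move=> a' b' nab; rewrite TnE //; apply: lo; apply: finj.
have Cnb a b i : a != b -> C a b i <> \bot.
  move=> nab hb; apply: nt; exists (f a), (f b); split; first by apply: finj.
  exists i; apply/eqP; rewrite -lex0 -hb; exact: LC.
have pC a b : a != b -> proj_closed (C a b).
  move=> nab i j nij.
  have isn : is_network (@bislice_set _ M S i j) (@resN _ M i j _ Tn).
    move=> a' b' nab'; split; first by exists (Tn a' b'); split => //; apply: STn.
    by rewrite /resN (sTn a' b' nab').
  have := Hyp nij (card_ord 3) isn; rewrite /dissociable.
  have -> : (fun a b => pclos (@resN _ M i j _ Tn a b)) = @resN _ M i j _ Tn.
    apply: functional_extensionality => a'; apply: functional_extensionality => b'.
    by rewrite closed_pclos //; apply: res_closed; apply: pclos_closed.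
  rewrite cclos_res; case=> [[_ hpc _]|[a' [b' [nab' [k hk]]]]].
    by apply: res_closed_back => //; apply: hpc.
  by exfalso; apply: (Cnb a' b' (val k) nab').
pose iT := inT x y z; pose g := tg x y.
have gneq u v : iT u -> iT v -> u != v -> g u != g v by exact: tg_neq.
have fg u : iT u -> f (g u) = u by exact: tfg.
pose K' : Network M E := fun u v =>
  if [&& iT u, iT v & u != v] then C (g u) (g v) else K u v.
have K'K u v : relle (K' u v) (K u v).
  rewrite /K'; case: ifP => [/and3P [iu iv _]|_]; last exact: relle_refl.
  by have := CT (g u) (g v); rewrite !fg.
exists K'; split; first split.
- move=> u v nuv; rewrite /K'; case: ifP => [/and3P [iu iv _]|_].
    by apply: SC; apply: gneq.
  exact: SK.
- move=> u v nuv.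
  have cond : [&& iT v, iT u & v != u] = [&& iT u, iT v & u != v].
    by rewrite (eq_sym v u) andbCA.
  rewrite /K' cond; case: ifP => [/and3P [iu iv _]|_].
    by apply: sC; apply: gneq.
  exact: sK.
- move=> u v nuv; rewrite /K'; case: ifP => [/and3P [iu iv _]|_].
    by apply: pC; apply: gneq.
  exact: pK.
- move=> u v nuv; rewrite /K'; case: ifP => [/and3P [iu iv _]|_].
    by have := LC (g u) (g v) (gneq _ _ iu iv nuv); rewrite !fg.
  exact: lo.
- by move=> u v; apply: relle_trans (K'K u v) (hi u v).
apply: phiN_lt => // eqK; apply: nle.
have ix : iT x by rewrite /iT /inT eqxx.
have iz : iT z by rewrite /iT /inT eqxx !orbT.
have : K' x z = K x z by rewrite eqK.
rewrite /K' ix iz nxz /= /g tgx (tgz nyz nxz) => <- i.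
apply: le_trans (cC (@Ordinal 3 0 isT) (@Ordinal 3 1 isT) (@Ordinal 3 2 isT) isT isT isT i) _.
by apply: comp_mono; [exact: (CT (@Ordinal 3 0 isT) (@Ordinal 3 1 isT) i) |
   exact: (CT (@Ordinal 3 1 isT) (@Ordinal 3 2 isT) i)].
Qed.
Lemma main_closed : Inv N1 -> net_proj_closed N'.
Proof.
suff H n K : (phiN K <= n)%N -> Inv K -> net_proj_closed N'.
  by apply: H (leqnn _).
elim: n K => [|n IH] K hp iK; case: (classic (comp_closed K)) => cK;
  try exact: final iK cK;
  have [K' [iK' lt]] := step iK cK.
  by move: (leq_trans lt hp); rewrite ltn0.
by apply: (IH K') => //; rewrite -ltnS (leq_trans lt hp).
Qed.
End Main.

Theorem proposition6p6 (m : nat) (M : malg 'I_m) (S : Rel M -> Prop) :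
  proj_closed_set S ->
  compmeet_closed_set S ->
  (forall i j : 'I_m, i != j ->
     forall (E : finType), #|E| = 3 ->
     forall N : Network (bislice M i j) E,
       is_network (@bislice_set _ M S i j) N -> dissociable N) ->
  dissociable_set S.
Proof.
move=> HpS HcS Hyp E N isN; rewrite /dissociable.
set N1 : Network M E := fun x y => pclos (N x y).
case: (classic (triv_incons (cclos N1))) => [h|nt]; [by right | left].
split => //; first exact: cclos_closed.
apply: (main_closed HcS Hyp nt); split.
- by move=> x y nxy; apply: HpS; have [] := isN x y nxy.
- move=> x y nxy; rewrite /N1; have [_ ->] := isN x y nxy; exact: pclos_conv.
- move=> x y _; exact: pclos_closed.
- by move=> x y _; apply: cclos_le.
- by move=> x y; apply: relle_refl.
Qed.
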